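(* Let $\mathcal{R}$ be a ring and let $(\mathcal{C}^{\bullet},\partial)$ be a bigraded cochain complex of $\mathcal{R}$-modules as described in the context. Then there is a commutative diagram with exact rows and exact columns whose rows are \[ 0\to B^{1}(\mathcal{N}_{0},\overline{\partial})\hookrightarrow B^{1}(\mathcal{C},\partial)\xrightarrow{\pi_{1}} B^{1}(\mathcal{C}^{0,\bullet},\partial_{0,1})\to 0, \] \[ 0\to Z^{1}(\mathcal{N}_{0},\overline{\partial})\hookrightarrow Z^{1}(\mathcal{C},\partial)\xrightarrow{\pi_{1}} \ker(\rho_{1})\to 0, \] \[ 0\to H^{1}(\mathcal{N}_{0},\overline{\partial})\to H^{1}(\mathcal{C},\partial)\to \frac{\ker(\rho_{1})}{B^{1}(\mathcal{C}^{0,\bullet},\partial_{0,1})}\to 0, \] where the vertical maps from the first to the second row are inclusions, the vertical maps from the second to the third row are the canonical quotient projections, and the maps of the third row are the ones induced by those of the second row. In particular, $B^{1}(\mathcal{C}^{0,\bullet},\partial_{0,1})\subseteq\ker(\rho_{1})$ and the last row is a short exact sequence.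
   Context: Setting: $\mathcal{C}^{\bullet}=\bigoplus_{k\in\mathbb{Z}}\mathcal{C}^{k}$ is a graded $\mathcal{R}$-module with a compatible bigrading $\mathcal{C}^{k}=\bigoplus_{p+q=k}\mathcal{C}^{p,q}$, where $\mathcal{C}^{p,q}=\{0\}$ whenever $p<0$ or $q<0$; $\partial$ is an $\mathcal{R}$-linear map of degree $1$ with $\partial^{2}=0$, and $\partial=\partial_{2,-1}+\partial_{1,0}+\partial_{0,1}$ with $\partial_{i,j}(\mathcal{C}^{p,q})\subseteq\mathcal{C}^{p+i,q+j}$. For $\eta\in\mathcal{C}^{k}$, $\eta_{p,q}$ denotes its component in $\mathcal{C}^{p,q}$. For $q\in\mathbb{Z}$, $G^{q}\mathcal{C}:=\bigoplus_{j\geq q}\mathcal{C}^{i,j}$ and $\pi_{q}:\mathcal{C}\to G^{q}\mathcal{C}$ is the projection along the bigrading. $Z,B,H$ denote cocycles, coboundaries, cohomology; since $\partial_{0,1}^{2}=0$, $(\mathcal{C}^{0,\bullet},\partial_{0,1})$ is a cochain complex. Let $\mathcal{N}^{p,q}:=\ker(\partial_{0,1}|_{\mathcal{C}^{p,q}})\cap\ker(\partial_{2,-1}|_{\mathcal{C}^{p,q}})$ and $\mathcal{N}_{0}:=\bigoplus_{p}\mathcal{N}^{p,0}$ (so $\mathcal{N}^{p,0}=\ker(\partial_{0,1}:\mathcal{C}^{p,0}\to\mathcal{C}^{p,1})$, in degree $p$); this is a subcomplex of $(\mathcal{C},\partial)$ and $\overline{\partial}$ denotes the restriction of $\partial$ to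 it (which equals $\partial_{1,0}$ there). Let $\mathcal{A}^{k}:=\{\pi_{1}(\eta)\mid\eta\in\mathcal{C}^{k},\ \pi_{1}(\partial\eta)=0\}$. For $\xi\in\mathcal{A}^{k}$ and any $\eta\in\mathcal{C}^{k}$ with $\pi_{1}\eta=\xi$, $\pi_{1}(\partial\eta)=0$, the element $\partial_{2,-1}\xi_{k-1,1}+\partial_{1,0}\eta_{k,0}$ is a $(k+1)$-cocycle of $(\mathcal{N}_{0},\overline{\partial})$ whose cohomology class depends only on $\xi$; this defines the linear map $\rho_{k}:\mathcal{A}^{k}\to H^{k+1}(\mathcal{N}_{0},\overline{\partial})$, $\rho_{k}(\xi):=[\partial_{2,-1}\xi_{k-1,1}+\partial_{1,0}\eta_{k,0}]$. *)

(* Defs.v *)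
From HB Require Import structures.
From mathcomp Require Import all_boot all_order all_algebra.
Set Implicit Arguments. Unset Strict Implicit. Unset Printing Implicit Defensive.
Import GRing.Theory.
Local Open Scope ring_scope.

(* A bigraded cochain complex of R-modules C^{p,q} (p,q >= 0; components with
   a negative index are zero and hence omitted), with total differential
   d = d21 + d10 + d01, where
     d10 p q : C^{p,q}   -> C^{p+1,q}
     d01 p q : C^{p,q}   -> C^{p,q+1}
     d21 p q : C^{p,q+1} -> C^{p+2,q}   (d_{2,-1}; it vanishes on C^{p,0}).
   The condition d^2 = 0 on the total complex C^k = (+)_{p+q=k} C^{p,q} is
   written out bidegree by bidegree. *)
Record bicomplex (R : nzRingType) := Bicomplex {
  Cpq : nat -> nat -> lmodType R;
  d10 : forall p q, {linear Cpq p q -> Cpq p.+1 q};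
  d01 : forall p q, {linear Cpq p q -> Cpq p q.+1};
  d21 : forall p q, {linear Cpq p q.+1 -> Cpq p.+2 q};
  dd_02 : forall p q (x : Cpq p q), d01 _ _ (d01 _ _ x) = 0;
  dd_11 : forall p q (x : Cpq p q), d10 _ _ (d01 _ _ x) + d01 _ _ (d10 _ _ x) = 0;
  (* bidegree (2,0), on C^{p,0} (no d21 on C^{p,0}) *)
  dd_20_0 : forall p (x : Cpq p 0), d10 _ _ (d10 _ _ x) + d21 _ _ (d01 _ _ x) = 0;
  dd_20_S : forall p q (x : Cpq p q.+1),
      d10 _ _ (d10 _ _ x) + d01 _ _ (d21 _ _ x) + d21 _ _ (d01 _ _ x) = 0;
  dd_3m1 : forall p q (x : Cpq p q.+1), d10 _ _ (d21 _ _ x) + d21 _ _ (d10 _ _ x) = 0;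
  dd_4m2 : forall p q (x : Cpq p q.+2), d21 _ _ (d21 _ _ x) = 0
}.
Arguments d10 {R} b {p q}.
Arguments d01 {R} b {p q}.
Arguments d21 {R} b {p q}.

Section Low.
Variables (R : nzRingType) (K : bicomplex R).
Local Notation C := (Cpq K).
Local Notation d10 := (d10 K).
Local Notation d01 := (d01 K).
Local Notation d21 := (d21 K).

Definition C0 := C 0 0.
Definition C1 := (C 1 0 * C 0 1)%type.
Definition C2 := (C 2 0 * (C 1 1 * C 0 2))%type.

Definition dtot0 (y : C 0 0) : C1 := (d10 y, d01 y).
Definition dtot1 (x : C1) : C2 :=
  (d10 x.1 + d21 x.2, (d01 x.1 + d10 x.2, d01 x.2)).

(* pi_1 : projection onto G^1 C (components with q >= 1) *)
Definition pi1_1 (x : C1) : C 0 1 := x.2.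
Definition pi1_2 (z : C2) : (C 1 1 * C 0 2)%type := z.2.

Definition incl1 (a : C 1 0) : C1 := (a, 0).

(* (N_0, dbar): N^{p,0} = ker(d01 : C^{p,0} -> C^{p,1}), dbar = d10 *)
Definition N0 p (x : C p 0) : Prop := d01 x = 0.
Definition B1N0 (x : C 1 0) : Prop := exists y : C 0 0, N0 y /\ d10 y = x.
Definition Z1N0 (x : C 1 0) : Prop := N0 x /\ d10 x = 0.
Definition B2N0 (x : C 2 0) : Prop := exists a : C 1 0, N0 a /\ d10 a = x.
Definition Z2N0 (x : C 2 0) : Prop := N0 x /\ d10 x = 0.

Definition B1C (x : C1) : Prop := exists y : C0, dtot0 y = x.
Definition Z1C (x : C1) : Prop := dtot1 x = 0.

Definition B1C0 (b : C 0 1) : Prop := exists y : C 0 0, d01 y = b.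

Definition A1 (xi : C 0 1) : Prop :=
  exists eta : C1, pi1_1 eta = xi /\ pi1_2 (dtot1 eta) = 0.

(* c is a representative of the class rho_1(xi) in H^2(N_0, dbar):
   c = d21 xi_{0,1} + d10 eta_{1,0} for some eta with pi_1 eta = xi and
   pi_1 (d eta) = 0. *)
Definition rho1_rep (xi : C 0 1) (c : C 2 0) : Prop :=
  exists eta : C1, [/\ pi1_1 eta = xi, pi1_2 (dtot1 eta) = 0 &
                       c = d21 (pi1_1 eta) + d10 eta.1].

Definition ker_rho1 (xi : C 0 1) : Prop :=
  A1 xi /\ exists c, rho1_rep xi c /\ B2N0 c.

End Low.

Arguments N0 {R} K {p} x.
Arguments dtot0 {R} K y.
Arguments dtot1 {R} K x.
Arguments pi1_1 {R} K x.
Arguments pi1_2 {R} K z.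
Arguments incl1 {R} K a.
Arguments B1N0 {R} K x.
Arguments Z1N0 {R} K x.
Arguments B2N0 {R} K x.
Arguments Z2N0 {R} K x.
Arguments B1C {R} K x.
Arguments Z1C {R} K x.
Arguments B1C0 {R} K b.
Arguments A1 {R} K xi.
Arguments rho1_rep {R} K xi c.
Arguments ker_rho1 {R} K xi.

Definition submod (R : nzRingType) (M : lmodType R) (P : M -> Prop) : Prop :=
  [/\ P 0, (forall x y, P x -> P y -> P (x + y)) &
      (forall (r : R) x, P x -> P (r *: x))].

(* (Z, B) describes the subquotient Z/B of M: submodules B <= Z <= M *)
Definition subquot (R : nzRingType) (M : lmodType R) (Z B : M -> Prop) : Prop :=
  [/\ submod Z, submod B & forall x, B x -> Z x].

Definition zeroP (R : nzRingType) (M : lmodType R) (x : M) : Prop := x = 0.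

(* ses Z1 B1 Z2 B2 Z3 B3 f g : the linear maps f : M1 -> M2, g : M2 -> M3
   induce maps  Z1/B1 -> Z2/B2 -> Z3/B3  (well defined), and
   0 -> Z1/B1 -> Z2/B2 -> Z3/B3 -> 0 is exact.  Everything is unfolded to
   elements of the ambient modules (quotient modules are not available). *)
Definition ses (R : nzRingType) (M1 M2 M3 : lmodType R)
    (Z1 B1 : M1 -> Prop) (Z2 B2 : M2 -> Prop) (Z3 B3 : M3 -> Prop)
    (f : M1 -> M2) (g : M2 -> M3) : Prop :=
  [/\ subquot Z1 B1 /\ subquot Z2 B2 /\ subquot Z3 B3,
      (forall (r : R) x y, f (r *: x + y) = r *: f x + f y) /\
      (forall (r : R) x y, g (r *: x + y) = r *: g x + g y),
      [/\ forall x, Z1 x -> Z2 (f x), forall x, B1 x -> B2 (f x),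
          forall y, Z2 y -> Z3 (g y) & forall y, B2 y -> B3 (g y)],
      (* exactness at Z1/B1: induced f injective *)
      (forall x, Z1 x -> B2 (f x) -> B1 x) &
      [/\ (* exactness at Z2/B2: im fbar <= ker gbar and ker gbar <= im fbar *)
          (forall x, Z1 x -> B3 (g (f x))),
          (forall y, Z2 y -> B3 (g y) -> exists2 x, Z1 x & B2 (y - f x)) &
          (* exactness at Z3/B3: induced g surjective *)
          (forall z, Z3 z -> exists2 y, Z2 y & B3 (z - g y))]].

(* Main.v *)
Require Import Defs.
From HB Require Import structures.
From mathcomp Require Import all_boot all_order all_algebra.
Import GRing.Theory.
Local Open Scope ring_scope.

Lemma pairE (A B : Type) (x y : A * B) : x.1 = y.1 -> x.2 = y.2 -> x = y.
Proof. by case: x; case: y => ? ? ? ? /= -> ->. Qed.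

Lemma submod_zero (R : nzRingType) (M : lmodType R) : submod (@zeroP R M).
Proof. rewrite /zeroP; split => //; [move=> x y -> ->; rewrite addr0 | move=> r x ->; rewrite scaler0] =>//. Qed.

Lemma sq0 (R : nzRingType) (M : lmodType R) (Z : M -> Prop) : submod Z -> subquot Z (@zeroP R M).
Proof. move=> H; split => //; first exact: submod_zero. by move=> x; rewrite /zeroP => ->; case: H. Qed.

Lemma col_ses (R : nzRingType) (M : lmodType R) (Z B : M -> Prop) :
  subquot Z B -> ses B (@zeroP R _) Z (@zeroP R _) Z B id id.
Proof.
move=> [sZ sB BZ]; have [B0 _ _] := sB.
split.
- by split; [exact: sq0 | split; [exact: sq0 | split]].
- by [].
- by split => //= x; rewrite /zeroP => ->.
- by [].
- split => //=.
  + by move=> y Zy By; exists y => //; rewrite /zeroP subrr.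
  + by move=> z Zz; exists z => //; rewrite subrr.
Qed.

Section S.
Variables (R : nzRingType) (K : bicomplex R).

Lemma sB1N0 : submod (B1N0 K).
Proof.
split.
- by exists 0; rewrite /N0 !linear0.
- move=> _ _ [y [Ny <-]] [y' [Ny' <-]]; exists (y + y'); split.
  + by rewrite /N0 linearD Ny Ny' addr0.
  + by rewrite linearD.
- move=> r _ [y [Ny <-]]; exists (r *: y); split.
  + by rewrite /N0 linearZ_LR Ny scaler0.
  + by rewrite linearZ_LR.
Qed.

Lemma sZ1N0 : submod (Z1N0 K).
Proof.
split.
- by rewrite /Z1N0 /N0 !linear0.
- move=> x y [Nx Dx] [Ny Dy]; split.
  + by rewrite /N0 linearD Nx Ny addr0.
  + by rewrite linearD Dx Dy addr0.
- move=> r x [Nx Dx]; split.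
  + by rewrite /N0 linearZ_LR Nx scaler0.
  + by rewrite linearZ_LR Dx scaler0.
Qed.

Lemma dtot1D (x y : C1 K) : dtot1 K (x + y) = dtot1 K x + dtot1 K y.
Proof.
apply: pairE; last apply: pairE; rewrite /= !linearD //; exact: addrACA.
Qed.

Lemma dtot1Z r (x : C1 K) : dtot1 K (r *: x) = r *: dtot1 K x.
Proof.
apply: pairE; last apply: pairE; rewrite /= !linearZ_LR //; by rewrite scalerDr.
Qed.

Lemma dtot10 : dtot1 K 0 = 0.
Proof. by apply: pairE; last apply: pairE; rewrite /= !linear0 ?addr0. Qed.

Lemma sZ1C : submod (Z1C K).
Proof.
rewrite /Z1C; split.
- exact: dtot10.
- by move=> x y Hx Hy; rewrite dtot1D Hx Hy addr0.
- by move=> r x Hx; rewrite dtot1Z Hx scaler0.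
Qed.

Lemma sB1C : submod (B1C K).
Proof.
split.
- by exists 0; apply: pairE; rewrite /= linear0.
- move=> _ _ [y <-] [y' <-]; exists (y + y'); apply: pairE; by rewrite /= linearD.
- move=> r _ [y <-]; exists (r *: y); apply: pairE; by rewrite /= linearZ_LR.
Qed.

Lemma sB1C0 : submod (B1C0 K).
Proof.
split.
- by exists 0; rewrite linear0.
- move=> _ _ [y <-] [y' <-]; exists (y + y'); by rewrite linearD.
- move=> r _ [y <-]; exists (r *: y); by rewrite linearZ_LR.
Qed.

Lemma Zker (y : C1 K) : Z1C K y -> ker_rho1 K y.2.
Proof.
move=> Hy; split.
- by exists y; split => //; rewrite /pi1_2 Hy.
- exists 0; split.
  + exists y; split => //; first by rewrite /pi1_2 Hy.
    have /= H1 := congr1 fst Hy.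
    by rewrite /pi1_1 addrC H1.
  + by exists 0; rewrite /N0 !linear0.
Qed.

Lemma kerZ xi : ker_rho1 K xi -> exists y, Z1C K y /\ y.2 = xi.
Proof.
move=> [_ [c [[eta [e2 Heta ->]] [a [Na ca]]]]].
exists (eta.1 - a, eta.2); split; last exact: e2.
have /= H2 := congr1 fst Heta; have /= H3 := congr1 snd Heta.
apply: pairE; last apply: pairE; rewrite /= ?linearB /=.
- rewrite ca /pi1_1 [d21 _ _ + _]addrC opprD addrA subrr sub0r addNr //.
- by rewrite Na subr0.
- exact: H3.
Qed.


Lemma skerr : submod (ker_rho1 K).
Proof.
have [Z0 Zadd Zsc] := sZ1C.
split.
- exact: (@Zker (0) Z0).
- move=> _ _ /kerZ [y [Hy <-]] /kerZ [y' [Hy' <-]].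
  exact: (@Zker (y + y') (Zadd _ _ Hy Hy')).
- move=> r _ /kerZ [y [Hy <-]].
  exact: (@Zker (r *: y) (Zsc _ _ Hy)).
Qed.

Lemma B1N0_Z x : B1N0 K x -> Z1N0 K x.
Proof.
move=> [y [Ny <-]]; split; rewrite /N0.
- by have := @dd_11 _ K _ _ y; rewrite Ny linear0 add0r.
- by have := @dd_20_0 _ K _ y; rewrite Ny linear0 addr0.
Qed.

Lemma B1C_Z x : B1C K x -> Z1C K x.
Proof.
move=> [y <-]; rewrite /Z1C; apply: pairE; last apply: pairE.
- exact: dd_20_0.
- by rewrite /= addrC; exact: dd_11.
- exact: dd_02.
Qed.

Lemma B1C0_ker x : B1C0 K x -> ker_rho1 K x.
Proof. by move=> [y <-]; apply: (@Zker (dtot0 K y)); apply: B1C_Z; exists y. Qed.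

Lemma incl1_lin r x y : incl1 K (r *: x + y) = r *: incl1 K x + incl1 K y.
Proof. by apply: pairE => //=; rewrite scaler0 addr0. Qed.

Lemma Z1N0_Z x : Z1N0 K x -> Z1C K (incl1 K x).
Proof.
move=> [Nx Dx]; apply: pairE; last apply: pairE; rewrite /= ?linear0 ?addr0 //.
Qed.

Lemma Z1C_fst y : Z1C K y -> y.2 = 0 -> Z1N0 K y.1.
Proof.
move=> Hy e; have /= H1 := congr1 fst Hy; have /= H2 := congr1 snd Hy.
have /= H21 := congr1 fst H2.
rewrite e linear0 addr0 in H1; rewrite e linear0 addr0 in H21.
by split.
Qed.

Lemma row1 : ses (B1N0 K) (@zeroP R _) (B1C K) (@zeroP R _) (B1C0 K) (@zeroP R _)
          (incl1 K) (pi1_1 K).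
Proof.
split.
- split; [exact: sq0 sB1N0 | split; [exact: sq0 sB1C | exact: sq0 sB1C0]].
- split; [exact: incl1_lin | by []].
- split.
  + move=> _ [y [Ny <-]]; exists y; apply: pairE => //=.
  + by move=> x; rewrite /zeroP => ->.
  + by move=> _ [y <-]; exists y.
  + by move=> y; rewrite /zeroP => ->.
- move=> x _ H; exact: (congr1 fst H).
- split.
  + by [].
  + move=> _ [u <-] H; exists (d10 K u); first by exists u.
    apply: pairE => /=; first by rewrite subrr.
    by rewrite subr0; exact: H.
  + move=> _ [u <-]; exists (dtot0 K u); first by exists u.
    by rewrite /zeroP subrr.
Qed.

Lemma row2 : ses (Z1N0 K) (@zeroP R _) (Z1C K) (@zeroP R _) (ker_rho1 K) (@zeroP R _)
          (incl1 K) (pi1_1 K).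
Proof.
split.
- split; [exact: sq0 sZ1N0 | split; [exact: sq0 sZ1C | exact: sq0 skerr]].
- split; [exact: incl1_lin | by []].
- split.
  + exact: Z1N0_Z.
  + by move=> x; rewrite /zeroP => ->.
  + exact: Zker.
  + by move=> y; rewrite /zeroP => ->.
- move=> x _ H; exact: (congr1 fst H).
- split.
  + by [].
  + move=> y Hy H; exists y.1; first exact: Z1C_fst.
    apply: pairE => /=; first by rewrite subrr.
    by rewrite subr0; exact: H.
  + move=> z /kerZ [y [Hy e]]; exists y => //.
    by rewrite /zeroP /pi1_1 e subrr.
Qed.

Lemma row3 : ses (Z1N0 K) (B1N0 K) (Z1C K) (B1C K) (ker_rho1 K) (B1C0 K)
          (incl1 K) (pi1_1 K).
Proof.
split.
- split; [split; [exact: sZ1N0 | exact: sB1N0 | exact: B1N0_Z]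
         | split; split; [exact: sZ1C | exact: sB1C | exact: B1C_Z
                         | exact: skerr | exact: sB1C0 | exact: B1C0_ker]].
- split; [exact: incl1_lin | by []].
- split.
  + exact: Z1N0_Z.
  + move=> _ [y [Ny <-]]; exists y; apply: pairE => //=.
  + exact: Zker.
  + by move=> _ [y <-]; exists y.
- move=> x _ [u Hu]; exists u; split; [exact: (congr1 snd Hu) | exact: (congr1 fst Hu)].
- split.
  + by move=> x _; exists 0; rewrite linear0.
  + move=> y Hy [u Hu]; exists (y.1 - d10 K u).
    * have [_ Zadd Zsc] := sZ1C.
      have Zw : Z1C K (y - dtot0 K u).
        apply: Zadd => //; rewrite -scaleN1r; apply: Zsc; apply: B1C_Z; by exists u.
      apply: (Z1C_fst _ Zw).
      by rewrite /= Hu /pi1_1 subrr.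
    * exists u; apply: pairE => /=.
      - by rewrite opprB addrC subrK.
      - by rewrite subr0.
  + move=> z /kerZ [y [Hy e]]; exists y => //.
    by exists 0; rewrite linear0 /pi1_1 e subrr.
Qed.

End S.

Theorem theorem5p3 (R : nzRingType) (K : bicomplex R) :
  (* rows *)
  [/\ (* 0 -> B^1(N_0) -> B^1(C) -> B^1(C^{0,.}) -> 0 *)
      ses (B1N0 K) (@zeroP R _) (B1C K) (@zeroP R _) (B1C0 K) (@zeroP R _)
          (incl1 K) (pi1_1 K),
      (* 0 -> Z^1(N_0) -> Z^1(C) -> ker rho_1 -> 0 *)
      ses (Z1N0 K) (@zeroP R _) (Z1C K) (@zeroP R _) (ker_rho1 K) (@zeroP R _)
          (incl1 K) (pi1_1 K) &
      (* 0 -> H^1(N_0) -> H^1(C) -> ker rho_1 / B^1(C^{0,.}) -> 0,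
         maps induced by those of the second row *)
      ses (Z1N0 K) (B1N0 K) (Z1C K) (B1C K) (ker_rho1 K) (B1C0 K)
          (incl1 K) (pi1_1 K)] /\
  (* columns: 0 -> B -> Z -> Z/B -> 0 (inclusion, canonical projection) *)
  [/\ ses (B1N0 K) (@zeroP R _) (Z1N0 K) (@zeroP R _) (Z1N0 K) (B1N0 K) id id,
      ses (B1C K) (@zeroP R _) (Z1C K) (@zeroP R _) (Z1C K) (B1C K) id id &
      ses (B1C0 K) (@zeroP R _) (ker_rho1 K) (@zeroP R _) (ker_rho1 K) (B1C0 K)
          id id].
Proof.
split; split.
- exact: row1.
- exact: row2.
- exact: row3.
- apply: col_ses; split; [exact: sZ1N0 | exact: sB1N0 | exact: B1N0_Z].
- apply: col_ses; split; [exact: sZ1C | exact: sB1C | exact: B1C_Z].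
- apply: col_ses; split; [exact: skerr | exact: sB1C0 | exact: B1C0_ker].
Qed.
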